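(* Suppose $\mathbf{a}=\{a_n\}_{n=1}^\infty$ and $\mathbf{b}=\{b_n\}_{n=1}^\infty$ are linearly recurrent sequences of complex numbers such that $|a_n-b_n|$ is bounded. Then the minimal polynomials of $\mathbf{a}$ and $\mathbf{b}$ have the same roots outside the unit circle, with the same multiplicities. In particular, $\max_k \mathrm{GR}^{(k)}(\mathbf{a})=\max_k\mathrm{GR}^{(k)}(\mathbf{b})$.
   Context: A linear recurrence is a relation $a_{n+d}+c_{d-1}a_{n+d-1}+\cdots+c_0a_n=0$ for all $n$ with constant complex coefficients; a sequence is linearly recurrent if it satisfies one, and its minimal polynomial is the unique monic characteristic polynomial $t^d+c_{d-1}t^{d-1}+\cdots+c_0$ of minimal degree of a linear recurrence it satisfies. For a complex sequence $\mathbf{a}$ and $k\ge1$, $\mathrm{GR}^{(k)}(\mathbf{a})=\limsup_{n\to\infty}|\det H_{n,k}|^{1/n}$, where $H_{n,k}$ is the $k\times k$ matrix with $(i,j)$ entry $a_{n+i+j}$ ($0\le i,j\le k-1$); $\mathrm{GR}^{(0)}(\mathbf{a})=1$. *)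

(* Defs.v *)
From HB Require Import structures.
From mathcomp Require Import all_boot all_order all_algebra.
From mathcomp Require Import all_classical all_reals all_analysis.
From mathcomp Require Import complex.
Set Implicit Arguments. Unset Strict Implicit. Unset Printing Implicit Defensive.
Import Order.TTheory GRing.Theory Num.Theory.
Local Open Scope ring_scope.

Section Defs.
Variable R : realType.
Local Notation C := R[i].

Definition satisfies_rec (a : nat -> C) (p : {poly C}) : Prop :=
  forall n : nat, \sum_(i < size p) p`_i * a (n + i)%N = 0.

Definition lin_recurrent (a : nat -> C) : Prop :=
  exists p : {poly C}, p \is monic /\ satisfies_rec a p.

Definition is_minpoly (a : nat -> C) (p : {poly C}) : Prop :=
  [/\ p \is monic, satisfies_rec a p &
      forall q : {poly C}, q \is monic -> satisfies_rec a q -> (size p <= size q)%N].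

Definition hankel (a : nat -> C) (n k : nat) : 'M[C]_k :=
  \matrix_(i < k, j < k) a (n + i + j)%N.

Definition GR (k : nat) (a : nat -> C) : \bar R :=
  if k is 0 then 1%E
  else limn_esup (fun n : nat => ((Normc.normc (\det (hankel a n k))) `^ (n%:R^-1))%:E).

End Defs.

(* Main.v *)
Require Import Defs.
From HB Require Import structures.
From mathcomp Require Import all_boot all_order all_algebra all_fingroup.
From mathcomp Require Import all_classical all_reals all_analysis.
From mathcomp Require Import complex.
From mathcomp Require Import ring lra zify.
Import Order.TTheory GRing.Theory Num.Theory.
Local Open Scope ring_scope.
Set Implicit Arguments. Unset Strict Implicit. Unset Printing Implicit Defensive.


Section P0.
Variable R : realType.
Local Notation C := R[i].

Definition op (p : {poly C}) (a : nat -> C) : nat -> C :=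
  fun n => \sum_(i < size p) p`_i * a (n + i)%N.

Lemma op_sum (p : {poly C}) (a : nat -> C) n N : (size p <= N)%N ->
  op p a n = \sum_(i < N) p`_i * a (n + i)%N.
Proof.
move=> h; rewrite /op (big_ord_widen N (fun i : nat => p`_i * a (n+i)%N) h).
rewrite big_mkcond /=; apply: eq_bigr => i _; case: ifP => // /negbT.
by rewrite -leqNgt => hi; rewrite nth_default // mul0r.
Qed.

Lemma satE (a : nat -> C) p : satisfies_rec a p <-> forall n, op p a n = 0.
Proof. by []. Qed.

Lemma opD (p q : {poly C}) (a : nat -> C) n : op (p + q) a n = op p a n + op q a n.
Proof.
pose N := maxn (size p) (size q).
rewrite (@op_sum (p+q) _ _ N) ?size_add // (@op_sum p _ _ N) ?leq_maxl //.
rewrite (@op_sum q _ _ N) ?leq_maxr // -big_split /=.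
by apply: eq_bigr => i _; rewrite coefD mulrDl.
Qed.

Lemma opZ (c : C) (p : {poly C}) (a : nat -> C) n : op (c *: p) a n = c * op p a n.
Proof.
rewrite (@op_sum _ _ _ (size p)) ?size_scale_leq // /op mulr_sumr.
by apply: eq_bigr => i _; rewrite coefZ mulrA.
Qed.

Lemma opC (c : C) (a : nat -> C) n : op c%:P a n = c * a n.
Proof.
rewrite (@op_sum _ _ _ 1) ?size_polyC ?leq_b1 // big_ord1 coefC /= addn0.
by [].
Qed.

Lemma opMX (p : {poly C}) (a : nat -> C) n : op (p * 'X) a n = op p a n.+1.
Proof.
rewrite (@op_sum _ _ _ (size p).+1); last first.
  have [->|p0] := eqVneq p 0; first by rewrite mul0r size_poly0.
  by rewrite size_mulX.
rewrite big_ord_recl coefMX /= mul0r add0r /op.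
by apply: eq_bigr => i _; rewrite coefMX /= addSnnS.
Qed.

Lemma op_ext (p : {poly C}) (a b : nat -> C) : a =1 b -> op p a =1 op p b.
Proof. by move=> ab n; apply: eq_bigr => i _; rewrite ab. Qed.

Lemma opM (p q : {poly C}) (a : nat -> C) n : op (p * q) a n = op p (op q a) n.
Proof.
elim/poly_ind: p n => [|p c IH] n.
  by rewrite mul0r /op size_poly0 !big_ord0.
rewrite mulrDl mulrAC opD opMX IH opD opMX.
by rewrite !mul_polyC opZ opC.
Qed.

Lemma op1 (a : nat -> C) n : op 1 a n = a n.
Proof. by rewrite opC mul1r. Qed.

Lemma opXsubC (z : C) (a : nat -> C) n : op ('X - z%:P) a n = a n.+1 - z * a n.
Proof.
rewrite -[X in op (X - _)]mul1r -polyCN opD opMX op1 opC.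
by rewrite mulNr.
Qed.

Lemma op_add (p : {poly C}) (a b : nat -> C) n : op p (fun m => a m + b m) n = op p a n + op p b n.
Proof. by rewrite /op -big_split /=; apply: eq_bigr => i _; rewrite mulrDr. Qed.

Lemma op_opp (p : {poly C}) (a : nat -> C) n : op p (fun m => - a m) n = - op p a n.
Proof. by rewrite /op -sumrN; apply: eq_bigr => i _; rewrite mulrN. Qed.

Lemma op_sub (p : {poly C}) (a b : nat -> C) n : op p (fun m => a m - b m) n = op p a n - op p b n.
Proof. by rewrite op_add op_opp. Qed.

Lemma op0 (p : {poly C}) n : op p (fun _ => 0) n = 0.
Proof. by rewrite /op big1 // => i _; rewrite mulr0. Qed.

Lemma sat_mull (a : nat -> C) (p q : {poly C}) : satisfies_rec a q -> satisfies_rec a (p * q).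
Proof. by move=> h n; rewrite -/(op _ _ _) opM (op_ext _ h) op0. Qed.

Lemma sat_mulr (a : nat -> C) (p q : {poly C}) : satisfies_rec a p -> satisfies_rec a (p * q).
Proof. by rewrite mulrC; apply: sat_mull. Qed.

Lemma sat_op (a : nat -> C) (p q : {poly C}) : satisfies_rec a (q * p) -> satisfies_rec (op p a) q.
Proof. by move=> h n; rewrite -/(op _ _ _) -opM; apply: h. Qed.

End P0.


Section P1.
Variable R : realType.
Local Notation C := R[i].
Local Notation nc := (@Normc.normc R).

Lemma nc_ge0 (x : C) : 0 <= nc x.
Proof. by case: x => a b; apply: sqrtr_ge0. Qed.

Lemma ncD (x y : C) : nc (x + y) <= nc x + nc y.
Proof. exact: (@le_normcD R x y). Qed.

Lemma ncN (x : C) : nc (- x) = nc x.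
Proof. exact: (@normcN R x). Qed.

Lemma ncB (x y : C) : nc (x - y) <= nc x + nc y.
Proof. by rewrite (le_trans (ncD _ _)) // ncN. Qed.

Lemma nc_sum (I : Type) (r : seq I) (P : pred I) (F : I -> C) :
  nc (\sum_(i <- r | P i) F i) <= \sum_(i <- r | P i) nc (F i).
Proof.
elim/big_rec2: _ => [|i y1 y2 _ h]; first by rewrite Normc.normc0.
by apply: le_trans (ncD _ _) _; rewrite lerD2l.
Qed.

Lemma nc_prod (I : Type) (r : seq I) (P : pred I) (F : I -> C) :
  nc (\prod_(i <- r | P i) F i) = \prod_(i <- r | P i) nc (F i).
Proof.
elim/big_rec2: _ => [|i y1 y2 _ h]; first by rewrite Normc.normc1.
by rewrite Normc.normcM h.
Qed.

Lemma nc_exp (x : C) n : nc (x ^+ n) = nc x ^+ n.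
Proof.
elim: n => [|n IH]; first by rewrite !expr0 Normc.normc1.
by rewrite !exprS Normc.normcM IH.
Qed.

Lemma nc_eq0 (x : C) : (nc x == 0) = (x == 0).
Proof.
apply/eqP/eqP => [/Normc.eq0_normc //|->]; exact: Normc.normc0.
Qed.

Lemma bernoulli_ineq (rho : R) n : 1 <= rho -> 1 + n%:R * (rho - 1) <= rho ^+ n.
Proof.
move=> r1; elim: n => [|n IH]; first by rewrite mul0r addr0 expr0.
rewrite exprS; apply: le_trans (_ : rho * (1 + n%:R * (rho - 1)) <= _); last first.
  by rewrite ler_pM2l // (lt_le_trans ltr01 r1).
have h0 : 0 <= n%:R * (rho - 1) * (rho - 1).
  by rewrite mulr_ge0 // ?mulr_ge0 // ?subr_ge0.
rewrite -natr1; nra.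
Qed.

Lemma pow_large (rho K : R) : 1 < rho ->
  exists N, forall n, (N <= n)%N -> K <= rho ^+ n.
Proof.
move=> r1; exists (Num.truncn (K / (rho - 1))).+1 => n hn.
apply: le_trans (bernoulli_ineq n (ltW r1)).
have hr : 0 < rho - 1 by rewrite subr_gt0.
have h1 : K / (rho - 1) <= n%:R.
  apply: ltW; apply: lt_le_trans (truncnS_gt _) _; by rewrite ler_nat.
have : K <= n%:R * (rho - 1) by rewrite -ler_pdivrMr.
lra.
Qed.

Lemma minpoly_dvd (a : nat -> C) pa q : is_minpoly a pa -> satisfies_rec a q ->
  pa %| q.
Proof.
case=> mpa spa minpa sq.
have pa0 : pa != 0 by apply: monic_neq0.
have sr : satisfies_rec a (q %% pa).
  move=> n; rewrite -/(op _ _ _).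
  have e : q %% pa = q + (- (q %/ pa)) * pa.
    by rewrite {2}(divp_eq q pa) mulNr addrAC subrr add0r.
  rewrite e opD opM (op_ext _ spa) op0 addr0; exact: sq.
apply/modp_eq0P/eqP/negPn/negP => r0.
have lc : lead_coef (q %% pa) != 0 by rewrite lead_coef_eq0.
set r := q %% pa in sr r0 lc.
have mr : (lead_coef r)^-1 *: r \is monic.
  by apply/monicP; rewrite lead_coefZ mulVf.
have := minpa _ mr.
have srr : satisfies_rec a ((lead_coef r)^-1 *: r).
  by move=> n; rewrite -/(op _ _ _) opZ; have -> : op r a n = 0 := sr n; rewrite mulr0.
move=> /(_ srr); rewrite size_scale ?invr_eq0 //.
by rewrite leqNgt ltn_modp pa0.
Qed.

Lemma mup_dvd (z : C) p q : q != 0 -> p %| q -> (mup z p <= mup z q)%N.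
Proof.
move=> q0 pq; have p0 : p != 0.
  by apply: contra_neq q0 => p0; move: pq; rewrite p0 dvd0p => /eqP.
rewrite mup_geq //; apply: dvdp_trans pq; rewrite -mup_geq //.
Qed.

Definition bounded (c : nat -> C) := exists M : R, forall n, nc (c n) <= M.

Lemma bounded_op (c : nat -> C) p : bounded c -> bounded (op p c).
Proof.
case=> M hM; exists (\sum_(i < size p) nc p`_i * M) => n.
apply: le_trans (nc_sum _ _ _) _; apply: ler_sum => i _.
by rewrite Normc.normcM; apply: ler_wpM2l; rewrite ?nc_ge0.
Qed.

End P1.


Section P2.
Variable R : realType.
Local Notation C := R[i].
Local Notation nc := (@Normc.normc R).

Lemma strip (c : nat -> C) (z : C) (r : {poly C}) : bounded c -> 1 < nc z ->
  satisfies_rec c (('X - z%:P) * r) -> satisfies_rec c r.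
Proof.
move=> bc z1 sc.
pose e := op r c.
have he n : e n.+1 = z * e n.
  have := sc n; rewrite -/(op _ _ _) opM opXsubC => /eqP; rewrite subr_eq0.
  by move=> /eqP.
have en n : e n = z ^+ n * e 0%N.
  by elim: n => [|n IH]; rewrite ?expr0 ?mul1r // he IH exprS mulrA.
have [M hM] := bounded_op r bc.
suff e0 : e 0%N = 0 by move=> n; rewrite -/(op _ _ _) -/(e n) en e0 mulr0.
apply/eqP/negPn/negP => e0.
have ne0 : 0 < nc (e 0%N) by rewrite lt_def nc_eq0 e0 nc_ge0.
have [N hN] := pow_large (M / nc (e 0%N) + 1) z1.
have := hM N; rewrite -/(op _ _ _) -/(e N) en Normc.normcM nc_exp.
have := hN N (leqnn N) => h1 h2.
have : (M / nc (e 0%N) + 1) * nc (e 0%N) <= M.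
  apply: le_trans h2; by rewrite ler_pM2r.
rewrite mulrDl mulfVK ?gt_eqF // mul1r.
lra.
Qed.

Lemma strip_all (c : nat -> C) (rs : seq C) (r : {poly C}) : bounded c ->
  satisfies_rec c (\prod_(w <- rs) ('X - w%:P) * r) ->
  satisfies_rec c (\prod_(w <- rs | nc w <= 1) ('X - w%:P) * r).
Proof.
move=> bc; elim: rs r => [|z rs IH] r; first by rewrite !big_nil.
rewrite !big_cons; case: ifP => hz sc.
  rewrite -mulrA mulrCA; apply: IH.
  by rewrite mulrCA mulrA.
apply: IH; apply: (@strip _ z); first by [].
  by rewrite ltNge hz.
by rewrite mulrA.
Qed.

Lemma mup_le (a b : nat -> C) pa pb (z : C) :
  bounded (fun n => a n - b n) -> is_minpoly a pa -> is_minpoly b pb ->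
  1 < nc z -> (mup z pa <= mup z pb)%N.
Proof.
move=> bc ma mb z1.
have [mpa spa _] := ma; have [mpb spb _] := mb.
pose c := fun n => a n - b n.
have sc : satisfies_rec c (pa * pb).
  move=> n; rewrite -/(op _ _ _) op_sub.
  have -> : op (pa * pb) a n = 0 by apply: sat_mulr.
  have -> : op (pa * pb) b n = 0 by apply: sat_mull.
  by rewrite subrr.
have mab : pa * pb \is monic by rewrite monicMl.
have [rs hrs] := closed_field_poly_normal (pa * pb).
move: hrs; rewrite (monicP mab) scale1r => hrs.
have sc1 : satisfies_rec c (\prod_(w <- rs) ('X - w%:P) * 1).
  by rewrite mulr1 -hrs.
have := strip_all bc sc1; rewrite mulr1.
set Q := \prod_(w <- rs | nc w <= 1) ('X - w%:P) => sQ.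
have mQ : Q \is monic by apply: monic_prod => i _; apply: monicXsubC.
have sa : satisfies_rec a (pb * Q).
  move=> n; rewrite -/(op _ _ _).
  have -> : op (pb * Q) a n = op (pb * Q) (fun m => b m + c m) n.
    by apply: op_ext => m; rewrite /c addrC subrK.
  rewrite op_add.
  have -> : op (pb * Q) b n = 0 by apply: sat_mulr.
  have -> : op (pb * Q) c n = 0 by apply: sat_mull.
  by rewrite addr0.
have dv := minpoly_dvd ma sa.
have pbQ0 : pb * Q != 0 by apply: monic_neq0; by rewrite monicMl.
apply: leq_trans (mup_dvd z pbQ0 dv) _.
rewrite mupM ?monic_neq0 //.
suff -> : mup z Q = 0%N by rewrite addn0.
rewrite /Q -big_filter mu_prod_XsubC; apply/count_memPn.
by rewrite mem_filter negb_and -ltNge z1.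
Qed.

End P2.


Section P3.
Variable R : realType.
Local Notation C := R[i].
Local Notation nc := (@Normc.normc R).

Lemma growth (ws : seq C) (x : nat -> C) (rho : R) : 0 < rho ->
  all (fun w => nc w < rho) ws ->
  satisfies_rec x (\prod_(w <- ws) ('X - w%:P)) ->
  exists K, 0 <= K /\ forall n, nc (x n) <= K * rho ^+ n.
Proof.
move=> rho0; elim: ws x => [|w ws IH] x.
  move=> _; rewrite big_nil => sx; exists 0; split => // n.
  have := sx n; rewrite -/(op _ _ _) op1 => ->.
  by rewrite Normc.normc0 mul0r.
rewrite /= big_cons => /andP[hw hws] sx.
pose y := op ('X - w%:P) x.
have sy : satisfies_rec y (\prod_(w <- ws) ('X - w%:P)).
  by apply: sat_op; rewrite mulrC.
have [K [K0 hK]] := IH y hws sy.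
have d0 : 0 < rho - nc w by rewrite subr_gt0.
pose B := nc (x 0%N) + K / (rho - nc w).
have B1 : 0 <= K / (rho - nc w) by rewrite divr_ge0 // ltW.
exists B; split; first by rewrite addr_ge0 // nc_ge0.
elim=> [|n IHn]; first by rewrite expr0 mulr1 lerDl.
have e : x n.+1 = y n + w * x n by rewrite /y opXsubC subrK.
rewrite e; apply: le_trans (ncD _ _) _; rewrite Normc.normcM.
have h1 := hK n.
have h2 : nc w * nc (x n) <= nc w * (B * rho ^+ n).
  by rewrite ler_wpM2l // nc_ge0.
have h3 : K <= B * (rho - nc w).
  by rewrite /B mulrDl divfK ?gt_eqF // lerDr mulr_ge0 // ?nc_ge0 // ltW.
have hr : 0 <= rho ^+ n by rewrite exprn_ge0 // ltW.
rewrite exprS.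
have : K * rho ^+ n <= B * (rho - nc w) * rho ^+ n by rewrite ler_wpM2r.
nra.
Qed.

End P3.


Section P4.
Variable R : realType.
Local Notation C := R[i].
Local Notation nc := (@Normc.normc R).

Lemma det_colops (a : nat -> C) n k (ps : nat -> {poly C}) :
  (forall j, (j < k)%N -> ps j \is monic /\ size (ps j) = j.+1) ->
  \det (hankel a n k) = \det (\matrix_(i < k, j < k) op (ps j) a (n + i)%N).
Proof.
move=> hps.
pose U : 'M[C]_k := \matrix_(l < k, j < k) (ps j)`_l.
have -> : \matrix_(i < k, j < k) op (ps j) a (n + i)%N = hankel a n k *m U.
  apply/matrixP => i j; rewrite !mxE.
  have [_ sj] := hps j (ltn_ord j).
  rewrite (@op_sum _ _ _ _ k); last by rewrite sj.
  by apply: eq_bigr => l _; rewrite !mxE mulrC ?addnA.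
rewrite det_mulmx -(det_tr U) (@det_trig _ _ U^T).
  rewrite big1 ?mulr1 // => i _; rewrite !mxE.
  have [mi si] := hps i (ltn_ord i).
  by have := monicP mi; rewrite /lead_coef si.
apply/is_trig_mxP => i j ij; rewrite !mxE.
have [_ si] := hps i (ltn_ord i).
by rewrite nth_default // si.
Qed.

Lemma det_bound k (M : 'M[C]_k) (B : 'I_k -> R) :
  (forall i j, nc (M i j) <= B j) -> nc (\det M) <= k`!%:R * \prod_j B j.
Proof.
move=> hB.
have B0 j : 0 <= B j by apply: le_trans (nc_ge0 (M j j)) (hB j j).
rewrite /determinant; apply: le_trans (nc_sum _ _ _) _.
apply: le_trans (_ : \sum_(s : 'S_k) \prod_j B j <= _); last first.
  by rewrite sumr_const card_Sn mulr_natl.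
apply: ler_sum => s _.
rewrite Normc.normcM nc_exp.
have -> : nc (-1 : C) = 1 by rewrite ncN Normc.normc1.
rewrite expr1n mul1r nc_prod.
rewrite [X in _ <= X](reindex_inj (@perm_inj _ s)) /=.
apply: ler_prod => i _; rewrite nc_ge0 /=.
exact: hB.
Qed.

Lemma prod_pert (I : Type) (r : seq I) (x y : I -> C) (al be : I -> R) :
  (forall i, nc (x i) <= al i) -> (forall i, nc (y i) <= be i) ->
  nc (\prod_(i <- r) (x i + y i) - \prod_(i <- r) x i) <=
    \prod_(i <- r) (al i + be i) - \prod_(i <- r) al i.
Proof.
move=> hx hy.
have al0 i : 0 <= al i by apply: le_trans (nc_ge0 _) (hx i).
have be0 i : 0 <= be i by apply: le_trans (nc_ge0 _) (hy i).
elim: r => [|i r IH]; first by rewrite !big_nil subrr Normc.normc0.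
rewrite !big_cons.
set P := \prod_(j <- r) (x j + y j); set Q := \prod_(j <- r) x j.
set P' := \prod_(j <- r) (al j + be j); set Q' := \prod_(j <- r) al j.
have hP : nc P <= P'.
  rewrite /P nc_prod; apply: ler_prod => j _; rewrite nc_ge0 /=.
  by apply: le_trans (ncD _ _) _; apply: lerD.
have e : (x i + y i) * P - x i * Q = y i * P + x i * (P - Q) by ring.
rewrite e; apply: le_trans (ncD _ _) _; rewrite !Normc.normcM.
have h1 : nc (y i) * nc P <= be i * P'.
  by apply: ler_pM; rewrite ?nc_ge0.
have h2 : nc (x i) * nc (P - Q) <= al i * (P' - Q').
  by apply: ler_pM; rewrite ?nc_ge0.
have : be i * P' + al i * (P' - Q') = (al i + be i) * P' - al i * Q' by ring.
lra.
Qed.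

Lemma det_pert k (X Y : 'M[C]_k) (al be : 'I_k -> R) :
  (forall i j, nc (X i j) <= al j) -> (forall i j, nc (Y i j) <= be j) ->
  nc (\det (X + Y) - \det X) <= k`!%:R * (\prod_j (al j + be j) - \prod_j al j).
Proof.
move=> hX hY.
rewrite /determinant -sumrB; apply: le_trans (nc_sum _ _ _) _.
apply: le_trans (_ : \sum_(s : 'S_k) (\prod_j (al j + be j) - \prod_j al j) <= _);
  last by rewrite sumr_const card_Sn mulr_natl.
apply: ler_sum => s _.
rewrite -mulrBr Normc.normcM nc_exp.
have -> : nc (-1 : C) = 1 by rewrite ncN Normc.normc1.
rewrite expr1n mul1r.
rewrite [X in _ <= X - _](reindex_inj (@perm_inj _ s)) /=.
rewrite [X in _ <= _ - X](reindex_inj (@perm_inj _ s)) /=.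
under eq_bigr do rewrite mxE.
by apply: prod_pert => i; [apply: hX | apply: hY].
Qed.

End P4.


Section P5.
Variable R : realType.
Local Open Scope classical_set_scope.

Lemma limsup_le (u : nat -> R) (c : R) N :
  (forall n, (N <= n)%N -> u n <= c) ->
  (limn_esup (fun n => (u n)%:E) <= c%:E)%E.
Proof.
move=> h; rewrite /limn_esup /limf_esup.
apply: le_trans (_ : (ereal_sup ((fun n => (u n)%:E) @` [set n | (N <= n)%N])<= _)%E).
  apply: ereal_inf_lbound; exists [set n | (N <= n)%N] => //.
  by exists N.
apply: ge_ereal_sup => _ [n hn <-]; rewrite lee_fin; exact: h.
Qed.

Lemma limsup_ge (u : nat -> R) (c : R) N :
  (forall n, (N <= n)%N -> c <= u n) ->
  (c%:E <= limn_esup (fun n => (u n)%:E))%E.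
Proof.
move=> h; rewrite /limn_esup /limf_esup.
apply: le_ereal_inf_tmp => _ [V [M _ hV] <-].
apply: le_trans (_ : (u (maxn N M))%:E <= _)%E.
  by rewrite lee_fin h // leq_maxl.
apply: ereal_sup_ubound; exists (maxn N M) => //; apply: hV.
by rewrite /= leq_maxr.
Qed.

Lemma powR_root (y : R) n : (0 < n)%N -> 0 <= y -> (y ^+ n) `^ (n%:R^-1) = y.
Proof.
move=> n0 y0; rewrite -powR_mulrn // -powRrM mulfV ?powRr1 //.
by rewrite pnatr_eq0 -lt0n.
Qed.

Lemma root_le (x y : R) n : (0 < n)%N -> 0 <= x -> 0 <= y -> x <= y ^+ n ->
  x `^ (n%:R^-1) <= y.
Proof.
move=> n0 x0 y0 h; rewrite -[leRHS](powR_root n0 y0).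
by apply: ge0_ler_powR => //; rewrite ?invr_ge0 ?ler0n // nnegrE exprn_ge0.
Qed.

Lemma root_ge (x y : R) n : (0 < n)%N -> 0 <= x -> 0 <= y -> y ^+ n <= x ->
  y <= x `^ (n%:R^-1).
Proof.
move=> n0 x0 y0 h; rewrite -[leLHS](powR_root n0 y0).
by apply: ge0_ler_powR => //; rewrite ?invr_ge0 ?ler0n // nnegrE exprn_ge0.
Qed.

Lemma pow_small m (s : R) : 0 <= s <= 1 -> (1 + s) ^+ m <= 1 + (2 ^+ m - 1) * s.
Proof.
case/andP => s0 s1; elim: m => [|m IH]; first by rewrite expr0 subrr mul0r addr0.
rewrite exprS.
have h2 : 1 <= (2:R) ^+ m by rewrite exprn_ege1 // ler1n.
apply: le_trans (_ : (1 + s) * (1 + (2 ^+ m - 1) * s) <= _).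
  by rewrite ler_wpM2l // addr_ge0.
rewrite exprS; set q := (2:R) ^+ m in h2 *.
have : (q - 1) * (s * s) <= (q - 1) * s.
  by rewrite ler_wpM2l ?subr_ge0 // -[leRHS]mulr1 ler_wpM2l.
nra.
Qed.

Lemma pow_le_eps m (t : R) : 0 < t -> exists rho : R, 1 < rho /\ rho ^+ m <= 1 + t.
Proof.
move=> t0; pose s := Num.min 1 (t / 2 ^+ m).
have h2 : 0 < (2:R) ^+ m by rewrite exprn_gt0.
have s0 : 0 < s by rewrite lt_min ltr01 divr_gt0.
have s1 : s <= 1 by rewrite ge_min lexx.
have s2 : s <= t / 2 ^+ m by rewrite ge_min lexx orbT.
exists (1 + s); split; first by rewrite ltrDl.
apply: le_trans (pow_small m _) _; first by rewrite ltW.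
have : 2 ^+ m * s <= t by rewrite -ler_pdivlMl // mulrC.
nra.
Qed.

End P5.


Section P6.
Variable R : realType.
Local Notation C := R[i].
Local Notation nc := (@Normc.normc R).

Definition geC : rel C := fun x y => nc y <= nc x.

Lemma geC_total : total geC.
Proof. by move=> x y; rewrite /geC le_total. Qed.
Lemma geC_trans : transitive geC.
Proof. by move=> x y z; rewrite /geC => h1 h2; apply: le_trans h2 h1. Qed.
Lemma geC_refl : reflexive geC.
Proof. by move=> x; rewrite /geC. Qed.

Lemma sorted_drop_le (s : seq C) j w : sorted geC s -> w \in drop j s ->
  nc w <= nc (nth 0 s j).
Proof.
move=> ss /(nthP 0)[i hi <-]; rewrite nth_drop.
rewrite size_drop in hi.
have := @sorted_leq_nth _ geC geC_trans geC_refl 0 s ss j (j + i).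
apply; rewrite ?inE /=; move: hi; rewrite -?[(j + i)%R]/(j + i)%N. all: set m := size s; clear; move=> hi. all: lia.
Qed.

Lemma prod_ge1 (I : Type) (r : seq I) (F : I -> R) :
  (forall i, 1 <= F i) -> 1 <= \prod_(i <- r) F i.
Proof.
move=> h; elim: r => [|i r IH]; rewrite ?big_nil ?big_cons //.
by rewrite mulr_ege1.
Qed.

Lemma prod_take_le (s : seq C) k (f : C -> R) : (forall w, 1 <= f w) ->
  \prod_(w <- take k s) f w <= \prod_(w <- s) f w.
Proof.
move=> h; rewrite -{2}(cat_take_drop k s) big_cat /=.
apply: ler_peMr; last exact: prod_ge1.
apply: le_trans (prod_ge1 _ h); exact: ler01.
Qed.

Definition Pi (rs : seq C) := \prod_(w <- rs) Num.max 1 (nc w).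

Lemma Pi_ge1 rs : 1 <= Pi rs.
Proof. by apply: prod_ge1 => w; rewrite le_max lexx. Qed.

Lemma GR_upper (a : nat -> C) (rs : seq C) k :
  satisfies_rec a (\prod_(w <- rs) ('X - w%:P)) ->
  (GR k a <= (Pi rs)%:E)%E.
Proof.
move=> sa.
have P1 := Pi_ge1 rs.
have Pi0 : 0 <= Pi rs by apply: le_trans ler01 P1.
case: k => [|k]; first by rewrite /= lee_fin.
set k1 := k.+1.
rewrite /GR -/k1; apply/lee_addgt0Pr => eps eps0.
have [rho [rho1 hrho]] := pow_le_eps k1.+1 (divr_gt0 eps0 (lt_le_trans ltr01 P1)).
have rho0 : 0 < rho by apply: lt_trans rho1.
pose rs' := sort geC (rs ++ nseq k1 0).
have srs : sorted geC rs' by apply: sort_sorted; exact: geC_total.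
have szrs : size rs' = (size rs + k1)%N by rewrite size_sort size_cat size_nseq.
pose ps j := \prod_(w <- take j rs') ('X - w%:P).
have hps j : (j < k1)%N -> ps j \is monic /\ size (ps j) = j.+1.
  move=> jk; split; first exact: monic_prod_XsubC.
  by rewrite size_prod_XsubC size_take szrs; case: ifP => //; lia.
have prs' : \prod_(w <- rs') ('X - w%:P) =
   \prod_(w <- rs) ('X - w%:P) * \prod_(w <- nseq k1 (0:C)) ('X - w%:P).
  by rewrite (perm_big _ (permEl (perm_sort _ _))) big_cat.
pose Rj (j : 'I_k1) := Num.max 1 (nc (nth 0 rs' j)) * rho.
have Rj1 j : 1 <= Rj j.
  by rewrite /Rj mulr_ege1 // ?le_max ?lexx // ltW.
have hK (j : 'I_k1) : exists K, 0 <= K /\ forall n, nc (op (ps j) a n) <= K * (Rj j) ^+ n.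
  apply: (@growth _ (drop j rs') (op (ps j) a) (Rj j)); first by apply: lt_le_trans ltr01 (Rj1 j).
    apply/allP => w hw; apply: le_lt_trans (sorted_drop_le srs hw) _.
    apply: (@le_lt_trans _ _ (Num.max 1 (nc (nth 0 rs' j)))).
      by rewrite le_max lexx orbT.
    by rewrite /Rj ltr_pMr // lt_max ltr01.
  apply: sat_op; rewrite mulrC -big_cat cat_take_drop prs'.
  exact: sat_mulr.
have [Kf hKf] := choice hK.
have Kf0 j : 0 <= Kf j by case: (hKf j).
pose L := k1`!%:R * \prod_(j < k1) (Kf j * (Rj j) ^+ k1).
have L0 : 0 <= L.
  rewrite mulr_ge0 ?ler0n // prodr_ge0 // => j _.
  by rewrite mulr_ge0 // exprn_ge0 // (le_trans ler01).
have prodR : \prod_(j < k1) Rj j <= rho ^+ k1 * Pi rs.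
  rewrite /Rj big_split /= prodr_const card_ord mulrC ler_pM2l ?exprn_gt0 //.
  have -> : \prod_(j < k1) Num.max 1 (nc (nth 0 rs' j)) =
      \prod_(w <- take k1 rs') Num.max 1 (nc w).
    rewrite [RHS](big_nth 0) size_take szrs.
    have -> : (if (k1 < size rs + k1)%N then k1 else (size rs + k1)%N) = k1.
      by case: ifP => //; lia.
    rewrite big_mkord; apply: eq_bigr => j _; rewrite nth_take //.
  apply: le_trans (prod_take_le _ _ _) _; first by move=> w; rewrite le_max lexx.
  rewrite (perm_big _ (permEl (perm_sort _ _))) big_cat /= /Pi.
  rewrite (_ : \prod_(i <- nseq k1 (0:C)) _ = 1) ?mulr1 //.
  by rewrite big1_seq // => w /andP[_ /nseqP[-> _]]; rewrite Normc.normc0 max_l ?ler01.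
have main n : nc (\det (hankel a n k1)) <= L * (rho ^+ k1 * Pi rs) ^+ n.
  rewrite (det_colops a n hps).
  apply: le_trans (@det_bound _ k1 _ (fun j => Kf j * (Rj j) ^+ k1 * (Rj j) ^+ n) _) _.
    move=> i j; rewrite mxE; apply: le_trans (proj2 (hKf j) _) _.
    rewrite -mulrA ler_wpM2l // exprD mulrC ler_wpM2r ?exprn_ge0 ?(le_trans ler01) //.
    by apply: ler_weXn2l => //; apply: ltnW.
  rewrite big_split /= mulrA ler_wpM2l //.
  rewrite prodrXl; apply: lerXn2r => //; rewrite ?nnegrE.
    by rewrite prodr_ge0 // => j _; rewrite (le_trans ler01).
  by rewrite mulr_ge0 ?exprn_ge0 ?(le_trans ler01) // ltW.
have [N hN] := pow_large L rho1.
apply: (@limsup_le _ _ _ (maxn N 1)) => n hn.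
apply: root_le; first by lia.
- exact: nc_ge0.
- by apply: addr_ge0; [exact: le_trans ler01 P1 | exact: ltW].
apply: le_trans (main n) _.
apply: le_trans (_ : rho ^+ n * (rho ^+ k1 * Pi rs) ^+ n <= _).
  rewrite ler_wpM2r ?hN //; last lia.
  by rewrite exprn_ge0 // mulr_ge0 // exprn_ge0 // ltW.
rewrite -exprMn; apply: lerXn2r; rewrite ?nnegrE.
- by rewrite mulr_ge0 ?mulr_ge0 ?exprn_ge0 // ltW.
- by apply: addr_ge0 => //; exact: ltW.
rewrite mulrA -exprS.
have {}Pi0 : 0 < Pi rs by apply: lt_le_trans ltr01 P1.
have : rho ^+ k1.+1 * Pi rs <= (1 + eps / Pi rs) * Pi rs by rewrite ler_pM2r.
by rewrite mulrDl mul1r divfK ?gt_eqF.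
Qed.

End P6.


Section P7.
Variable R : realType.
Local Notation C := R[i].
Local Notation nc := (@Normc.normc R).

Lemma lower_est m (X Y : nat -> 'M[C]_m) (b : 'I_m -> R) (mu rho K D : R) :
  1 < mu -> (forall j, mu <= b j) -> 1 < rho -> rho ^+ m < mu -> 0 <= K -> 0 < D ->
  (forall n, nc (\det (X n)) = D * (\prod_j b j) ^+ n) ->
  (forall n i j, nc (X n i j) <= K * (b j * rho) ^+ n) ->
  (forall n i j, nc (Y n i j) <= K * rho ^+ n) ->
  exists N, forall n, (N <= n)%N ->
    D / 2 * (\prod_j b j) ^+ n <= nc (\det (X n + Y n)).
Proof.
move=> mu1 bmu rho1 rhomu K0 D0 hdet hX hY.
have mu0 : 0 < mu by apply: lt_trans mu1.
have rho0 : 0 < rho by apply: lt_trans rho1.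
have b0 j : 0 <= b j by apply: le_trans (ltW mu0) (bmu j).
set Pi := \prod_j b j.
have Pi0 : 0 <= Pi by apply: prodr_ge0 => j _.
have rm0 : 0 < rho ^+ m by rewrite exprn_gt0.
pose q := mu / rho ^+ m.
have q1 : 1 < q by rewrite /q ltr_pdivlMr // mul1r.
have q0 : 0 < q by apply: lt_trans q1.
pose E := m`!%:R * K ^+ m * 2 ^+ m.
have E0 : 0 <= E by rewrite /E !mulr_ge0 ?ler0n ?exprn_ge0.
have [N hN] := pow_large (2 * E / D) q1.
exists N => n nN.
have hq := hN n nN.
have herr : nc (\det (X n + Y n) - \det (X n)) <= E * Pi ^+ n * (q ^+ n)^-1.
  apply: le_trans (det_pert (al := fun j => K * (b j * rho) ^+ n)
                            (be := fun j => K * rho ^+ n) _ _) _.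
  - by move=> i j; apply: hX.
  - by move=> i j; apply: hY.
  set c := K * rho ^+ n.
  have c0 : 0 <= c by rewrite mulr_ge0 // exprn_ge0 // ltW.
  have e1 : \prod_j (K * (b j * rho) ^+ n + K * rho ^+ n) =
            c ^+ m * \prod_j (b j ^+ n + 1).
    rewrite (eq_bigr (fun j => c * (b j ^+ n + 1))); last first.
      by move=> j _; rewrite /c exprMn; ring.
    by rewrite big_split /= prodr_const card_ord.
  have e2 : \prod_j (K * (b j * rho) ^+ n) = c ^+ m * Pi ^+ n.
    rewrite /Pi -prodrXl (eq_bigr (fun j => c * (b j ^+ n))); last first.
      by move=> j _; rewrite /c exprMn; ring.
    by rewrite big_split /= prodr_const card_ord.
  rewrite e1 e2.
  pose t := (mu ^+ n)^-1.
  have mun0 : 0 < mu ^+ n by rewrite exprn_gt0.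
  have t0 : 0 <= t by rewrite /t invr_ge0 ltW.
  have t1 : t <= 1 by rewrite /t invf_le1 // exprn_ege1 // ltW.
  have hprod : \prod_j (b j ^+ n + 1) <= Pi ^+ n * (1 + (2 ^+ m - 1) * t).
    apply: le_trans (_ : \prod_j (b j ^+ n * (1 + t)) <= _).
      apply: ler_prod => j _; rewrite addr_ge0 ?exprn_ge0 //=.
      rewrite mulrDr mulr1 lerD2l /t.
      have : mu ^+ n <= b j ^+ n by apply: (@lerXn2r _ n mu (b j)); rewrite ?nnegrE ?(ltW mu0) ?b0 ?bmu.
      by move=> h; rewrite ler_pdivlMr // mul1r.
    rewrite big_split /= prodr_const card_ord /Pi prodrXl ler_wpM2l ?exprn_ge0 //.
    by apply: pow_small; rewrite t0 t1.
  have cm0 : 0 <= c ^+ m by rewrite exprn_ge0.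
  have hPin : 0 <= Pi ^+ n by rewrite exprn_ge0.
  have h2m : (2:R) ^+ m - 1 <= 2 ^+ m by rewrite lerBlDr lerDl.
  have step : c ^+ m * \prod_j (b j ^+ n + 1) - c ^+ m * Pi ^+ n <=
              c ^+ m * (Pi ^+ n * (2 ^+ m * t)).
    rewrite -mulrBr ler_wpM2l // lerBlDl.
    apply: le_trans hprod _.
    rewrite mulrDr mulr1 lerD2l ler_wpM2l // ler_wpM2r //.
  apply: le_trans (_ : m`!%:R * (c ^+ m * (Pi ^+ n * (2 ^+ m * t))) <= _).
    by rewrite ler_wpM2l ?ler0n.
  have ec : c ^+ m = K ^+ m * (rho ^+ m) ^+ n by rewrite /c exprMn -!exprM mulnC.
  have et : (q ^+ n)^-1 = (rho ^+ m) ^+ n * t.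
    by rewrite /q /t exprMn exprVn invfM invrK mulrC.
  by rewrite et ec /E le_eqVlt; apply/orP; left; apply/eqP; ring.
have hmain := hdet n.
have hqn : 0 < q ^+ n by rewrite exprn_gt0.
have herr2 : E * Pi ^+ n * (q ^+ n)^-1 <= D / 2 * Pi ^+ n.
  rewrite mulrAC ler_wpM2r ?exprn_ge0 //.
  rewrite ler_pdivrMr //.
  have : 2 * E / D <= q ^+ n := hq.
  rewrite ler_pdivrMr // => h.
  by nra.
have tri : nc (\det (X n)) <= nc (\det (X n + Y n)) + nc (\det (X n + Y n) - \det (X n)).
  have e : \det (X n + Y n) - (\det (X n + Y n) - \det (X n)) = \det (X n) by ring.
  by have := ncB (\det (X n + Y n)) (\det (X n + Y n) - \det (X n)); rewrite e.
have hPin : 0 <= Pi ^+ n by rewrite exprn_ge0.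
move: tri; rewrite hmain => tri.
nra.
Qed.

Lemma limsup_from_lower (u : nat -> R) (Pi D : R) N :
  0 < D -> 0 <= Pi -> (forall n, (N <= n)%N -> D * Pi ^+ n <= u n) ->
  (Pi%:E <= limn_esup (fun n => (u n `^ (n%:R^-1))%:E))%E.
Proof.
move=> D0 Pi0 h.
apply/lee_mul01Pr; first by rewrite lee_fin.
move=> r /andP[r0 r1].
have ir1 : 1 < r^-1 by rewrite invf_gt1.
have [M hM] := pow_large (D^-1) ir1.
rewrite -EFinM; apply: (@limsup_ge _ _ _ (maxn (maxn N M) 1)) => n hn.
have nN : (N <= n)%N by lia.
have nM : (M <= n)%N by lia.
have u0 : 0 <= u n.
  apply: le_trans (h n nN); by rewrite mulr_ge0 ?exprn_ge0 // ltW.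
apply: root_ge => //; first by lia.
  by rewrite mulr_ge0 // ltW.
apply: le_trans (h n nN).
have hr : r ^+ n <= D.
  have := hM n nM; rewrite exprVn.
  rewrite lef_pV2 ?posrE ?exprn_gt0 ?invr_gt0 //.
by rewrite exprMn ler_wpM2r ?exprn_ge0.
Qed.

End P7.


Section P8.
Variable R : realType.
Local Notation C := R[i].
Local Notation nc := (@Normc.normc R).

Lemma rec_split (e : nat -> C) (P : {poly C}) m n : P \is monic -> size P = m.+1 ->
  op P e n = \sum_(i < m) P`_i * e (n + i)%N + e (n + m)%N.
Proof.
move=> mP sP; rewrite /op.
have -> : size P = m.+1 := sP.
rewrite big_ord_recr /=.
have -> : P`_m = 1 by have := monicP mP; rewrite /lead_coef sP.
by rewrite mul1r.
Qed.

Lemma rec_zero (e : nat -> C) (P : {poly C}) m : P \is monic -> size P = m.+1 ->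
  satisfies_rec e P -> (forall j, (j < m)%N -> e j = 0) -> forall n, e n = 0.
Proof.
move=> mP sP se h0 n; elim/ltn_ind: n => n IH.
have [nm|mn] := ltnP n m; first exact: h0.
have := se (n - m)%N; rewrite -/(op _ _ _) (rec_split _ _ mP sP).
rewrite big1 ?add0r; first by rewrite subnK.
move=> i _; rewrite IH ?mulr0 //; have := ltn_ord i; lia.
Qed.

Lemma hankel_shift (A : nat -> C) (P : {poly C}) n : P \is monic ->
  satisfies_rec A P ->
  hankel A n.+1 (size P).-1 = companionmx P *m hankel A n (size P).-1.
Proof.
move=> mP sA.
have sP : size P = ((size P).-1).+1.
  by rewrite prednK // size_poly_gt0 monic_neq0.
move: sP; set m := (size P).-1 => sP.
apply/matrixP => i j; rewrite !mxE.
under eq_bigr do rewrite !mxE.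
have hi := ltn_ord i.
case: (boolP (i == m.-1 :> nat)) => im.
  have -> : (n.+1 + i + j = n + j + m)%N by move/eqP: im; lia.
  have := sA (n + j)%N; rewrite -/(op _ _ _) (rec_split _ _ mP sP).
  move=> /eqP; rewrite addrC addr_eq0 => /eqP ->.
  rewrite -sumrN; apply: eq_bigr => l _; rewrite mulNr; congr (- (_ * A _)).
  lia.
have il : (i.+1 < m)%N by move: im; lia.
rewrite (bigD1 (Ordinal il)) //= eqxx mul1r big1 ?addr0.
  by congr A; lia.
move=> l hl; have -> : (i.+1 == l :> nat) = false.
  by apply/negbTE; apply: contra hl => /eqP h; apply/eqP/val_inj; rewrite /= h.
by rewrite mul0r.
Qed.

Lemma det_companion (P : {poly C}) : P \is monic ->
  \det (companionmx P) = (-1) ^+ (size P).-1 * P`_0.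
Proof.
move=> mP; have := char_poly_det (companionmx P).
rewrite companionmxK // => ->.
by rewrite mulrA -expr2 sqrr_sign mul1r.
Qed.

Lemma det_hankel_pow (A : nat -> C) (P : {poly C}) n : P \is monic ->
  satisfies_rec A P ->
  \det (hankel A n (size P).-1) = \det (companionmx P) ^+ n * \det (hankel A 0 (size P).-1).
Proof.
move=> mP sA; elim: n => [|n IH]; first by rewrite expr0 mul1r.
by rewrite hankel_shift // det_mulmx IH exprS mulrA.
Qed.


End P8.

Section P8b.
Variable R : realType.
Local Notation C := R[i].

Lemma hankel0_nonsing (a A s : nat -> C) (pa Pb Ps : {poly C}) :
  is_minpoly a pa -> pa = Pb * Ps -> Pb \is monic -> Ps \is monic ->
  satisfies_rec A Pb -> satisfies_rec s Ps -> (forall n, a n = A n + s n) ->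
  \det (hankel A 0 (size Pb).-1) != 0.
Proof.
move=> [mpa spa minpa] epa mPb mPs sA ss hAs.
have sPb : size Pb = ((size Pb).-1).+1.
  by rewrite prednK // size_poly_gt0 monic_neq0.
move: sPb; set m := (size Pb).-1 => sPb.
apply/negP => /det0P [v v0 vH].
pose q : {poly C} := \poly_(l < m) \sum_(i < m) v 0 i * (l == i :> nat)%:R.
have qc (l : 'I_m) : q`_l = v 0 l.
  rewrite coef_poly ltn_ord (bigD1 l) //= eqxx mulr1 big1 ?addr0 //.
  move=> i hi; rewrite (_ : (l == i :> nat) = false) ?mulr0 //.
  by apply/negbTE; apply: contra hi => /eqP h; apply/eqP/val_inj; rewrite /= h.
have q0 : q != 0.
  apply: contra v0 => /eqP q0; apply/eqP/rowP => i.
  by rewrite !mxE -qc q0 coef0.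
have sq : (size q <= m)%N by apply: size_poly.
pose e := op q A.
have se : satisfies_rec e Pb by apply: sat_op; apply: sat_mulr.
have e0 j : (j < m)%N -> e j = 0.
  move=> hj; rewrite /e (@op_sum _ _ _ _ m) //.
  have := congr1 (fun M : 'M[C]_(1, m) => M 0 (Ordinal hj)) vH; rewrite !mxE => h; apply: (etrans _ h).
  by apply: eq_bigr => i _; rewrite qc !mxE add0n addnC mulrC.
have eA := rec_zero mPb sPb se e0.
have sa : satisfies_rec a (q * Ps).
  move=> n; rewrite -/(op _ _ _) (op_ext _ hAs) op_add.
  have -> : op (q * Ps) A n = 0 by apply: sat_mulr.
  have -> : op (q * Ps) s n = 0 by apply: sat_mull.
  by rewrite addr0.
have r0 : q * Ps != 0 by rewrite mulf_neq0 // monic_neq0.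
have lc : lead_coef (q * Ps) != 0 by rewrite lead_coef_eq0.
have mr : (lead_coef (q * Ps))^-1 *: (q * Ps) \is monic.
  by apply/monicP; rewrite lead_coefZ mulVf.
have sr : satisfies_rec a ((lead_coef (q * Ps))^-1 *: (q * Ps)).
  by move=> n; rewrite -/(op _ _ _) opZ; have -> : op (q * Ps) a n = 0 := sa n; rewrite mulr0.
have := minpa _ mr sr; rewrite size_scale ?invr_eq0 // epa.
rewrite size_mul ?monic_neq0 // size_mul //.
have := size_poly_gt0 Ps; rewrite monic_neq0 // => hPs.
move: sPb sq hPs; clearbody m q; move: (size Pb) (size Ps) (size q) => x y z; lia.
exact: monic_neq0.
Qed.

End P8b.


Section P9.
Variable R : realType.
Local Notation C := R[i].
Local Notation nc := (@Normc.normc R).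

Lemma min_big (s : seq C) : all (fun w => 1 < nc w) s ->
  exists mu : R, 1 < mu /\ forall w, w \in s -> mu <= nc w.
Proof.
elim: s => [|w s IH] /=.
  by move=> _; exists 2; split => [|w]; rewrite ?in_nil ?ltr1n.
case/andP => hw /IH [mu [mu1 hmu]].
exists (Num.min (nc w) mu); split; first by rewrite lt_min hw mu1.
move=> x; rewrite in_cons => /orP[/eqP->|hx]; first by rewrite ge_min lexx.
by rewrite ge_min hmu ?orbT.
Qed.

Lemma coprime_prod (P : {poly C}) (s : seq C) :
  (forall w, w \in s -> ~~ root P w) -> coprimep P (\prod_(w <- s) ('X - w%:P)).
Proof.
elim: s => [|w s IH] h; first by rewrite big_nil coprimep1.
rewrite big_cons coprimepMr coprimep_XsubC h ?mem_head //= IH // => x hx.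
by apply: h; rewrite in_cons hx orbT.
Qed.

Lemma nc_sign n : nc ((-1 : C) ^+ n) = 1.
Proof. by rewrite nc_exp ncN Normc.normc1 expr1n. Qed.

Lemma prod_nth_ord (s : seq C) (f : C -> R) :
  \prod_(w <- s) f w = \prod_(j < size s) f (nth 0 s j).
Proof. by rewrite (big_nth 0) big_mkord. Qed.

Lemma GR_lower (a : nat -> C) (pa : {poly C}) (rs : seq C) :
  is_minpoly a pa -> pa = \prod_(w <- rs) ('X - w%:P) ->
  exists k, ((Pi rs)%:E <= GR k a)%E.
Proof.
move=> ma epa0.
pose isbig := fun w : C => 1 < nc w.
pose bs := sort (@geC R) (seq.filter isbig rs).
pose ss := seq.filter (predC isbig) rs.
pose Pb := \prod_(w <- bs) ('X - w%:P).
pose Ps := \prod_(w <- ss) ('X - w%:P).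
have ePb : Pb = \prod_(w <- seq.filter isbig rs) ('X - w%:P).
  by rewrite /Pb (perm_big _ (permEl (perm_sort (@geC R) _))).
have epa : pa = Pb * Ps.
  by rewrite epa0 -(perm_big _ (permEl (perm_filterC isbig rs))) big_cat /= ePb.
have mPb : Pb \is monic by apply: monic_prod_XsubC.
have mPs : Ps \is monic by apply: monic_prod_XsubC.
have bsbig w : w \in bs -> 1 < nc w.
  by rewrite mem_sort mem_filter => /andP[].
have PiE : Pi rs = \prod_(w <- bs) nc w.
  rewrite /Pi -(perm_big _ (permEl (perm_filterC isbig rs))) big_cat /=.
  rewrite [X in _ * X]big1_seq ?mulr1; last first.
    by move=> w /andP[_]; rewrite mem_filter /= /isbig => /andP[hw _]; rewrite max_l // leNgt.
  rewrite (perm_big _ (permEl (perm_sort (@geC R) _))) /=.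
  by apply: eq_big_seq => w; rewrite mem_filter => /andP[hw _]; rewrite max_r // ltW.
have sPb : size Pb = (size bs).+1 by rewrite size_prod_XsubC.
have [bs0|bsn0] := eqVneq bs [::].
  exists 0%N; by rewrite /= PiE bs0 big_nil.
have cop : coprimep Pb Ps.
  apply: coprime_prod => w; rewrite mem_filter /= => /andP[hw _].
  rewrite root_prod_XsubC; apply: contra hw => /bsbig.
  by rewrite /isbig => ->.
have [[u1 u2] /= hu] := Bezout_eq1_coprimepP _ _ cop.
pose A := op (u2 * Ps) a.
pose s := op (u1 * Pb) a.
have [mpa spa _] := ma.
have hAs n : a n = A n + s n.
  by rewrite /A /s -opD addrC hu op1.
have sA : satisfies_rec A Pb.
  apply: sat_op; have -> : Pb * (u2 * Ps) = u2 * pa by rewrite epa mulrCA.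
  exact: sat_mull.
have ss_ : satisfies_rec s Ps.
  apply: sat_op; have -> : Ps * (u1 * Pb) = u1 * pa by rewrite epa mulrCA [Pb * Ps]mulrC.
  exact: sat_mull.
have D0 := hankel0_nonsing ma epa mPb mPs sA ss_ hAs.
set m := (size Pb).-1 in D0.
have hm : m = size bs by rewrite /m sPb.
have m0 : (0 < m)%N by rewrite hm lt0n size_eq0.
exists m.
have [m' hm'] : exists m', m = m'.+1 by exists m.-1; rewrite prednK.
rewrite hm' /GR -hm'.
set D := nc (\det (hankel A 0 m)).
have D0' : 0 < D by rewrite lt_def nc_eq0 D0 nc_ge0.
have b1 (j : 'I_m) : 1 < nc (nth 0 bs j).
  by apply: bsbig; apply: mem_nth; rewrite -hm.
pose b (j : 'I_m) := nc (nth 0 bs j).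
have PiM : \prod_j b j = Pi rs.
  rewrite PiE [RHS](big_nth 0) -hm big_mkord //.
pose ps j := \prod_(w <- take j bs) ('X - w%:P).
have hps j : (j < m)%N -> ps j \is monic /\ size (ps j) = j.+1.
  move=> jm; split; first exact: monic_prod_XsubC.
  by rewrite size_prod_XsubC size_take -hm jm.
have [mu [mu1 hmu]] : exists mu : R, 1 < mu /\ forall w, w \in bs -> mu <= nc w.
  by apply: min_big; apply/allP => w /bsbig.
have bmu j : mu <= b j by apply: hmu; apply: mem_nth; rewrite -hm.
have [rho [rho1 hrho]] : exists rho : R, 1 < rho /\ rho ^+ m <= 1 + (mu - 1) / 2.
  by apply: pow_le_eps; rewrite divr_gt0 // subr_gt0.
have rhomu : rho ^+ m < mu by apply: le_lt_trans hrho _; lra.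
have rho0 : 0 < rho by apply: lt_trans rho1.
have hKx (j : 'I_m) : exists K, 0 <= K /\ forall n, nc (op (ps j) A n) <= K * (b j * rho) ^+ n.
  apply: (@growth _ (drop j bs) (op (ps j) A) (b j * rho)).
  - by rewrite mulr_gt0 // (lt_trans ltr01 (b1 j)).
  - apply/allP => w hw /=; apply: le_lt_trans (sorted_drop_le _ hw) _.
      by apply: sort_sorted; exact: geC_total.
    by rewrite ltr_pMr // (lt_trans ltr01 (b1 j)).
  - apply: sat_op; rewrite mulrC -big_cat cat_take_drop; exact: sA.
have hKy (j : 'I_m) : exists K, 0 <= K /\ forall n, nc (op (ps j) s n) <= K * rho ^+ n.
  apply: (@growth _ ss (op (ps j) s) rho) => //.
  - apply/allP => w; rewrite mem_filter /= => /andP[hw _].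
    by apply: le_lt_trans rho1; rewrite leNgt.
  - by apply: sat_op; apply: sat_mulr.
have [Kx hKx'] := choice hKx.
have [Ky hKy'] := choice hKy.
have Kx0 j : 0 <= Kx j by case: (hKx' j).
have Ky0 j : 0 <= Ky j by case: (hKy' j).
have bge1 j : 1 <= b j * rho by apply: mulr_ege1; [exact: ltW (b1 j) | exact: ltW].
pose K := \sum_j (Kx j * (b j * rho) ^+ m + Ky j * rho ^+ m).
have nn j : 0 <= Kx j * (b j * rho) ^+ m + Ky j * rho ^+ m.
  apply: addr_ge0; apply: mulr_ge0 => //; apply: exprn_ge0.
    exact: le_trans ler01 (bge1 j).
  exact: ltW.
have K0 : 0 <= K by rewrite sumr_ge0.
have Kterm j : Kx j * (b j * rho) ^+ m + Ky j * rho ^+ m <= K.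
  by rewrite /K (bigD1 j) //= lerDl sumr_ge0.
pose X n := \matrix_(i < m, j < m) op (ps j) A (n + i)%N.
pose Y n := \matrix_(i < m, j < m) op (ps j) s (n + i)%N.
have hdet n : nc (\det (X n)) = D * (\prod_j b j) ^+ n.
  rewrite /X -det_colops // det_hankel_pow // Normc.normcM nc_exp mulrC.
  congr (_ * _); congr (_ ^+ _).
  rewrite det_companion // Normc.normcM nc_sign mul1r -horner_coef0 /Pb horner_prod.
  rewrite nc_prod PiM PiE; apply: eq_bigr => w _.
  by rewrite hornerXsubC sub0r ncN.
have hX n i j : nc (X n i j) <= K * (b j * rho) ^+ n.
  rewrite mxE; apply: le_trans (proj2 (hKx' j) _) _.
  rewrite (addnC n i) exprD mulrA ler_wpM2r //.
    by apply: exprn_ge0; exact: le_trans ler01 (bge1 j).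
  apply: le_trans (Kterm j); apply: le_trans (_ : Kx j * (b j * rho) ^+ m <= _).
    by rewrite ler_wpM2l // ler_weXn2l // ltnW.
  by rewrite lerDl mulr_ge0 // exprn_ge0 // ltW.
have hY n i j : nc (Y n i j) <= K * rho ^+ n.
  rewrite mxE; apply: le_trans (proj2 (hKy' j) _) _.
  rewrite (addnC n i) exprD mulrA ler_wpM2r //.
    by apply: exprn_ge0; exact: ltW.
  apply: le_trans (Kterm j); apply: le_trans (_ : Ky j * rho ^+ m <= _).
    rewrite ler_wpM2l // ler_weXn2l //; [exact: ltW | exact: ltnW].
  rewrite lerDr; apply: mulr_ge0 => //; apply: exprn_ge0; exact: le_trans ler01 (bge1 j).
have [N hN] := lower_est mu1 bmu rho1 rhomu K0 D0' hdet hX hY.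
apply: (@limsup_from_lower _ _ (Pi rs) (D / 2) N).
- by rewrite divr_gt0.
- by apply: le_trans (Pi_ge1 rs).
move=> n nN; rewrite -PiM.
apply: le_trans (hN n nN) _; rewrite le_eqVlt; apply/orP; left; apply/eqP.
congr (Normc.normc _); rewrite (det_colops a n hps); congr (\det _).
apply/matrixP => i j; rewrite !mxE.
by rewrite (op_ext _ hAs) op_add.
Qed.

End P9.


Section P10.
Variable R : realType.
Local Notation C := R[i].
Local Notation nc := (@Normc.normc R).

Lemma exists_minpoly (a : nat -> C) : lin_recurrent a -> exists pa, is_minpoly a pa.
Proof.
case=> p [mp sp].
suff : forall n (p : {poly C}), (size p <= n)%N -> p \is monic -> satisfies_rec a p ->
  exists pa, is_minpoly a pa by move=> /(_ (size p) p (leqnn _) mp sp).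
elim=> [|n IH] q hq mq sq.
  by move: hq; rewrite leqn0 size_poly_eq0 (negPf (monic_neq0 mq)).
case: (pselect (exists r : {poly C}, [/\ r \is monic, satisfies_rec a r & (size r < size q)%N])).
  case=> r [mr sr hr]; apply: (IH r) => //; lia.
move=> hn; exists q; split => // r mr sr.
rewrite leqNgt; apply/negP => hr; apply: hn; exists r; split => //.
Qed.

Lemma Pi_filter (rs : seq C) : Pi rs = \prod_(w <- seq.filter (fun w => 1 < nc w) rs) nc w.
Proof.
rewrite /Pi -(perm_big _ (permEl (perm_filterC (fun w => 1 < nc w) rs))) big_cat /=.
rewrite [X in _ * X]big1_seq ?mulr1; last first.
  by move=> w /andP[_]; rewrite mem_filter /= => /andP[hw _]; rewrite max_l // leNgt.
by apply: eq_big_seq => w; rewrite mem_filter => /andP[hw _]; rewrite max_r // ltW.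
Qed.

Lemma sup_GR (a : nat -> C) pa rs : is_minpoly a pa -> pa = \prod_(w <- rs) ('X - w%:P) ->
  ereal_sup [set GR k a | k in [set: nat]] = (Pi rs)%:E.
Proof.
move=> ma epa; have [_ spa _] := ma.
apply/eqP; rewrite eq_le; apply/andP; split.
  apply: ge_ereal_sup => _ [k _ <-]; apply: GR_upper; by rewrite -epa.
have [k hk] := GR_lower ma epa.
apply: le_trans hk _; apply: ereal_sup_ubound; by exists k.
Qed.

End P10.


Unset Implicit Arguments.
Theorem proposition2p3 (R : realType) (a b : nat -> R[i]) :
  lin_recurrent a -> lin_recurrent b ->
  (exists M : R, forall n : nat, Normc.normc (a n - b n) <= M) ->
  (forall pa pb : {poly R[i]}, is_minpoly a pa -> is_minpoly b pb ->
     forall z : R[i], 1 < Normc.normc z -> mup z pa = mup z pb) /\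
  ereal_sup [set GR k a | k in [set: nat]] = ereal_sup [set GR k b | k in [set: nat]].
Proof.
move=> la lb [M hM].
have bab : bounded (fun n => a n - b n) by exists M.
have bba : bounded (fun n => b n - a n).
  by exists M => n; rewrite -opprB ncN.
have part1 : forall pa pb : {poly R[i]}, is_minpoly a pa -> is_minpoly b pb ->
     forall z : R[i], 1 < Normc.normc z -> mup z pa = mup z pb.
  move=> pa pb ma mb z z1; apply/eqP; rewrite eqn_leq.
  by rewrite (mup_le bab ma mb z1) (mup_le bba mb ma z1).
split; first exact: part1.
have [pa ma] := exists_minpoly la.
have [pb mb] := exists_minpoly lb.
have [rsa ea] := closed_field_poly_normal pa.
have [rsb eb] := closed_field_poly_normal pb.
have [mpa _ _] := ma; have [mpb _ _] := mb.
move: ea eb; rewrite (monicP mpa) (monicP mpb) !scale1r => ea eb.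
apply: etrans (sup_GR ma ea) _; apply: esym; apply: etrans (sup_GR mb eb) _.
apply: esym; congr EFin; rewrite !Pi_filter.
apply: perm_big; apply/allP => x _; apply/eqP.
rewrite !count_filter.
case: (boolP (1 < Normc.normc x)) => hx.
  have e s : count (predI (pred1 x) (fun w => 1 < Normc.normc w)) s = count_mem x s.
    by apply: eq_count => y /=; case: eqP => // ->; rewrite hx.
  rewrite !e -!mu_prod_XsubC -ea -eb; exact: part1.
have e s : count (predI (pred1 x) (fun w => 1 < Normc.normc w)) s = 0%N.
  by apply/eqP; rewrite -leqn0 leqNgt -has_count; apply/hasP => -[y _ /= /andP[/eqP ->]]; rewrite (negPf hx).
by rewrite !e.
Qed.
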